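(* Let $n\in\mathbb{Z}^+$ with $n\geq 2$ and let $\Psi_n:\mathbb{R}\to\mathbb{R}$ be the polynomial of degree $n+4$ $$\Psi_n(t)=\frac{1}{(n+3)(n+4)}\left(t^{n+4}-1\right)+\frac{1}{n(n+1)}t^2\left(t^n-1\right)-\frac{2}{(n+1)(n+3)}t\left(t^{n+2}-1\right).$$ Then $\Psi_n(t)=\sum_{k=5}^{n+4}\frac{\Psi_n^{(k)}(1)}{k!}(t-1)^k$ for all $t\in\mathbb{R}$, and $\Psi_n^{(k)}(1)>0$ for all $5\leq k\leq n+4$. *)

(* Defs.v *)
From HB Require Import structures.
From mathcomp Require Import all_boot all_order all_algebra.
From mathcomp Require Import reals.
Set Implicit Arguments. Unset Strict Implicit. Unset Printing Implicit Defensive.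
Import Order.TTheory GRing.Theory Num.Theory.
Local Open Scope ring_scope.

Definition Psi (R : realType) (n : nat) : {poly R} :=
  ((n.+3)%:R * (n.+4)%:R)^-1 *: ('X^(n.+4) - 1)
  + ((n%:R * (n.+1)%:R)^-1 *: ('X^2 * ('X^n - 1)))
  - ((2 / ((n.+1)%:R * (n.+3)%:R)) *: ('X * ('X^(n.+2) - 1))).

(* Main.v *)
Require Import Defs.
From HB Require Import structures.
From mathcomp Require Import all_boot all_order all_algebra.
From mathcomp Require Import reals.
From mathcomp Require Import ring lra zify.
Import Order.TTheory GRing.Theory Num.Theory.
Local Open Scope ring_scope.

Section S.
Variable R : realType.
Variable n : nat.
Let a : R := ((n.+3)%:R * (n.+4)%:R)^-1.
Let b : R := (n%:R * (n.+1)%:R)^-1.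
Let c : R := 2 / ((n.+1)%:R * (n.+3)%:R).

Lemma PsiE : Psi R n = a *: ('X^(n.+4) - 'X^0) + b *: ('X^(n.+2) - 'X^2)
   - c *: ('X^(n.+3) - 'X^1).
Proof.
rewrite /Psi expr0 mulrBr mulr1 -exprD mulrBr mulr1 -exprS addnC.
by rewrite expr1 addn2.
Qed.

Lemma hornX m k : (('X^m)^`(k)).[1] = (m ^_ k)%:R :> R.
Proof. by rewrite derivnXn hornerMn hornerXn expr1n. Qed.

Lemma valE k : ((Psi R n)^`(k)).[1] =
  a * ((((n.+4)^_k)%N)%:R - (0^_k)%:R) + b * ((((n.+2)^_k)%N)%:R - (2^_k)%:R)
  - c * ((((n.+3)^_k)%N)%:R - (1^_k)%:R).
Proof.
by rewrite PsiE !(derivnB, derivnD, derivnZ) !hornerE !hornX.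
Qed.
Lemma natS m : (m.+1)%:R = m%:R + 1 :> R.
Proof. exact: mulrSr. Qed.

Hypothesis hn : (2 <= n)%N.

Lemma xge : 2 <= n%:R :> R.
Proof. by rewrite (ler_nat R 2 n). Qed.

Lemma val_small k : (k < 5)%N -> ((Psi R n)^`(k)).[1] = 0.
Proof.
have hx := xge.
case: k => [|[|[|[|[|]]]]] // _; rewrite valE /a /b /c.
all: have [m em] : exists m, n = m.+2 by exists n.-2; rewrite -(subnK hn) addn2.
all: rewrite em ?ffactSS ?ffactn1 ?ffactn0 ?ffact0n /= ?natrM ?natS ?mulr0n ?mulr1n.
all: have hm : 0 <= m%:R :> R by apply: ler0n.
all: field; do ?[apply/andP; split]; apply/eqP; lra.
Qed.

Lemma natmm m : m%:R * (m.-1)%:R = m%:R * (m%:R - 1) :> R.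
Proof. by case: m => [|m']; rewrite ?mul0r // natS addrK. Qed.

Lemma val_pos k : (5 <= k <= n + 4)%N -> 0 < ((Psi R n)^`(k)).[1].
Proof.
have hx := xge.
case: k => [|[|i]] // /andP[h5 h4].
have hi : (i <= n.+2)%N by lia.
have h0 : (0 < i.+2)%N by lia.
have h1 : (1 < i.+2)%N by lia.
have h2 : (2 < i.+2)%N by lia.
have e4 : ((n.+4)^_(i.+2) = n.+4 * n.+3 * (n.+2)^_i)%N by rewrite !ffactSS mulnA.
have e3 : ((n.+3)^_(i.+2) = n.+3 * ((n.+2)^_i * (n.+2 - i)))%N
  by rewrite ffactSS ffactnSr.
have e2 : ((n.+2)^_(i.+2) = (n.+2)^_i * ((n.+2 - i) * (n.+2 - i).-1))%N
  by rewrite !ffactnSr subnS mulnA.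
have hF : 0 < ((n.+2)^_i)%:R :> R by rewrite ltr0n ffact_gt0.
have em : n%:R + 2 = i%:R + (n.+2 - i)%:R :> R.
  by rewrite -[RHS]natrD subnKC // !natS; ring.
rewrite valE e4 e3 e2 (@ffact_small 0) // (@ffact_small 1) // (@ffact_small 2) //.
rewrite !natrM (natmm (n.+2 - i)) /a /b /c.
move: em hF; set F := ((n.+2)^_i)%:R; set M := (n.+2 - i)%:R => em hF.
have -> : M = n%:R + 2 - i%:R by rewrite em; ring.
have hI : 3 <= i%:R :> R by rewrite (ler_nat R 3 i); lia.
rewrite !natS.

have hh (E G : R) : E = G -> 0 < G -> 0 < E by move=> ->.
apply: (hh _ (F * ((i%:R - 2) * (i%:R - 1)) / (n%:R * (n%:R + 1)))).
  by field; do ?[apply/andP; split]; apply/eqP; lra.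
apply: divr_gt0; last by apply: mulr_gt0; lra.
apply: mulr_gt0 => //; apply: mulr_gt0; lra.
Qed.

Lemma size_Psi : (size (Psi R n) <= n + 5)%N.
Proof.
apply/leq_sizeP => j hj; rewrite PsiE !(coefD, coefB, coefN, coefZ, coefXn).

have -> : (j == n.+4) = false by apply/eqP; lia.
have -> : (j == n.+3) = false by apply/eqP; lia.
have -> : (j == n.+2) = false by apply/eqP; lia.
have -> : (j == 2)%N = false by apply/eqP; lia.
have -> : (j == 1)%N = false by apply/eqP; lia.
have -> : (j == 0)%N = false by apply/eqP; lia.
by rewrite /= !(mulr0n, subr0, mulr0, addr0).
Qed.

Lemma nder1 (p : {poly R}) i : (p^`N(i)).[1] = (p^`(i)).[1] / (i`!)%:R.
Proof.
by rewrite nderivn_def hornerMn -mulr_natr mulfK // pnatr_eq0 -lt0n fact_gt0.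
Qed.
End S.

Theorem lemma2p3 (R : realType) (n : nat) (hn : (2 <= n)%N) :
  (forall t : R,
     (Psi R n).[t] =
     \sum_(5 <= k < n + 5) ((Psi R n)^`(k)).[1] / (k`!)%:R * (t - 1) ^+ k)
  /\ (forall k : nat, (5 <= k <= n + 4)%N -> 0 < ((Psi R n)^`(k)).[1]).
Proof.
split; last exact: val_pos.
move=> t.
rewrite {1}(_ : t = 1 + (t - 1)); last by rewrite addrC subrK.
rewrite (nderiv_taylor_wide (mulrC 1 (t - 1)) (size_Psi R n hn)).
rewrite -(big_mkord xpredT (fun i => ((Psi R n)^`N(i)).[1] * (t - 1) ^+ i)).
rewrite (big_cat_nat _ (n := 5)) //= ?leq_addl //.
rewrite big_nat big1 ?add0r; last first.
  by move=> i /andP[_ hi]; rewrite nder1 (val_small R n hn) // mul0r mul0r.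
by apply: eq_bigr => i _; rewrite nder1.
Qed.
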